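(* Let $N, N_{\tilde y}, M, p \in \mathbb{N}$ with $p\le N$, $X\in\mathbb{R}^{N\times M}$, $\tilde Y \in \mathbb{R}^{N_{\tilde y}\times M}$, $\lambda\ge0$, $\Omega=\{1,\dots,N\}$. Let $\tilde Y = U\Sigma V$ be a singular value decomposition ($U,V$ orthogonal, $\Sigma$ with diagonal entries $\sigma_1(\tilde Y)\ge\sigma_2(\tilde Y)\ge\cdots$), and for $r\le\operatorname{rank}\tilde Y$ let $Z = \Sigma_{1:r,1:r}V_{1:r}$ ($V_{1:r}$ = first $r$ rows of $V$). Let $\bar S^{\mathrm r}_0=\emptyset$ and for $k\ge1$, $\bar s^{\mathrm r}_k \in \arg\max_{i\in\mathcal{F}(\bar S^{\mathrm r}_{k-1})} \{J_Z(\bar S^{\mathrm r}_{k-1}\cup\{i\}) - J_Z(\bar S^{\mathrm r}_{k-1})\}$, $\bar S^{\mathrm r}_k=\bar S^{\mathrm r}_{k-1}\cup\{\bar s^{\mathrm r}_k\}$, and let $\bar s^{\mathrm r,2}_k \in \arg\max_{i\in\mathcal{F}(\bar S^{\mathrm r}_{k-1})\setminus\{\bar s^{\mathrm r}_k\}}\{J_Z(\bar S^{\mathrm r}_{k-1}\cup\{i\}) - J_Z(\bar S^{\mathrm r}_{k-1})\}$ (the second-best element). Similarly let $\bar S^{\mathrm o}_0=\emptyset$, $\bar s^{\mathrm o}_k\in\arg\max_{i\in\mathcal{F}(\bar S^{\mathrm o}_{k-1})}\{J_{\tilde Y}(\bar S^{\mathrm o}_{k-1}\cup\{i\}) - J_{\tilde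 Y}(\bar S^{\mathrm o}_{k-1})\}$, $\bar S^{\mathrm o}_k = \bar S^{\mathrm o}_{k-1}\cup\{\bar s^{\mathrm o}_k\}$. If there is $k'\in\{1,\dots,p\}$ such that for every $k\in\{1,\dots,k'\}$ \[ J_Z(\bar S^{\mathrm r}_k) - J_Z(\bar S^{\mathrm r}_{k-1}\cup\{\bar s^{\mathrm r,2}_k\}) > \sum_{i=r+1}^{\operatorname{rank}\tilde Y}\sigma_i^2(\tilde Y), \] then $\bar S^{\mathrm r}_{k'} = \bar S^{\mathrm o}_{k'}$.
   Context: For a matrix $Y$ with $M$ columns and $S\subset\Omega$ with $X_SX_S^\top+\lambda I_{|S|}\succ0$, $J_Y(S) = \operatorname{tr}\{ Y X_S^\top (X_S X_S^\top + \lambda I_{|S|})^{-1} X_S Y^\top \}$, where $X_S$ is the submatrix of rows of $X$ indexed by $S$; $J_Y(\emptyset)=0$. For $S\subset\Omega$, the feasible set is $\mathcal{F}(S) = \{ i\in\Omega\setminus S : X_{S'}X_{S'}^\top + \lambda I_{|S'|}\succ0,\ S'=S\cup\{i\}\}$; the greedy sequences are assumed well defined (the relevant feasible sets nonempty, with at least two elements for defining $\bar s^{\mathrm r,2}_k$). *)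

(* Defs.v *)
From HB Require Import structures.
From mathcomp Require Import all_boot all_order all_algebra.
Set Implicit Arguments. Unset Strict Implicit. Unset Printing Implicit Defensive.
Import Order.TTheory GRing.Theory Num.Theory.
Local Open Scope ring_scope.

Section Defs.
Variable R : realFieldType.

Definition rows_of (N M : nat) (X : 'M[R]_(N, M)) (S : {set 'I_N}) : 'M[R]_(#|S|, M) :=
  \matrix_(i < #|S|, j < M) X (enum_val i) j.

Definition gram (N M : nat) (X : 'M[R]_(N, M)) (lam : R) (S : {set 'I_N}) : 'M[R]_#|S| :=
  rows_of X S *m (rows_of X S)^T + lam%:M.

Definition J (N M K : nat) (X : 'M[R]_(N, M)) (lam : R) (Y : 'M[R]_(K, M))
  (S : {set 'I_N}) : R :=
  \tr (Y *m (rows_of X S)^T *m invmx (gram X lam S) *m rows_of X S *m Y^T).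

Definition posdef (n : nat) (A : 'M[R]_n) : Prop :=
  A^T = A /\ forall v : 'rV[R]_n, v != 0 -> 0 < (v *m A *m v^T) 0 0.

Definition feasible (N M : nat) (X : 'M[R]_(N, M)) (lam : R) (S : {set 'I_N})
  (i : 'I_N) : Prop :=
  i \notin S /\ posdef (gram X lam (i |: S)).

Definition gain (N M K : nat) (X : 'M[R]_(N, M)) (lam : R) (Y : 'M[R]_(K, M))
  (S : {set 'I_N}) (i : 'I_N) : R := J X lam Y (i |: S) - J X lam Y S.

Definition greedy (N M K : nat) (X : 'M[R]_(N, M)) (lam : R) (Y : 'M[R]_(K, M))
  (p : nat) (s : nat -> 'I_N) (S : nat -> {set 'I_N}) : Prop :=
  S 0%N = set0 /\
  forall k, (1 <= k <= p)%N ->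
    [/\ feasible X lam (S k.-1) (s k),
        (forall i, feasible X lam (S k.-1) i ->
           gain X lam Y (S k.-1) i <= gain X lam Y (S k.-1) (s k)) &
        S k = s k |: S k.-1].

Definition second_best (N M K : nat) (X : 'M[R]_(N, M)) (lam : R) (Y : 'M[R]_(K, M))
  (p : nat) (s s2 : nat -> 'I_N) (S : nat -> {set 'I_N}) : Prop :=
  forall k, (1 <= k <= p)%N ->
    [/\ feasible X lam (S k.-1) (s2 k), s2 k != s k &
        forall i, feasible X lam (S k.-1) i -> i != s k ->
           gain X lam Y (S k.-1) i <= gain X lam Y (S k.-1) (s2 k)].

Definition orthogonal_mx (n : nat) (U : 'M[R]_n) : Prop := U^T *m U = 1%:M.

Definition diag_rect (m n : nat) (sigma : nat -> R) : 'M[R]_(m, n) :=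
  \matrix_(i < m, j < n) (if (i == j :> nat) then sigma i else 0).

Definition is_svd (K M : nat) (Y : 'M[R]_(K, M)) (U : 'M[R]_K) (sigma : nat -> R)
  (V : 'M[R]_M) : Prop :=
  [/\ orthogonal_mx U, orthogonal_mx V,
      (forall i, (i < minn K M)%N -> 0 <= sigma i),
      (forall i j, (i <= j)%N -> (j < minn K M)%N -> sigma j <= sigma i) &
      Y = U *m diag_rect K M sigma *m V].

Lemma rank_le_rows (K M r : nat) (Y : 'M[R]_(K, M)) : (r <= \rank Y)%N -> (r <= K)%N.
Proof. by move=> h; apply: leq_trans h (rank_leq_row Y). Qed.

Lemma rank_le_cols (K M r : nat) (Y : 'M[R]_(K, M)) : (r <= \rank Y)%N -> (r <= M)%N.
Proof. by move=> h; apply: leq_trans h (rank_leq_col Y). Qed.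

(* Z = Sigma_{1:r,1:r} V_{1:r} *)
Definition Zmat (K M r : nat) (Y : 'M[R]_(K, M)) (sigma : nat -> R) (V : 'M[R]_M)
  (hr : (r <= \rank Y)%N) : 'M[R]_(r, M) :=
  mxsub (widen_ord (rank_le_rows hr)) (widen_ord (rank_le_cols hr))
        (diag_rect K M sigma)
  *m rowsub (widen_ord (rank_le_cols hr)) V.

End Defs.

(* Main.v *)
Require Import Defs.
From HB Require Import structures.
From mathcomp Require Import all_boot all_order all_algebra.
From mathcomp Require Import ring lra.
Set Implicit Arguments. Unset Strict Implicit. Unset Printing Implicit Defensive.
Import Order.TTheory GRing.Theory Num.Theory.
Local Open Scope ring_scope.

Definition dotv (R : realFieldType) n (a b : 'rV[R]_n) : R := (a *m b^T) 0 0.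

Lemma dotvE (R : realFieldType) n (a b : 'rV[R]_n) : dotv a b = \sum_i a 0 i * b 0 i.
Proof. by rewrite /dotv !mxE; apply: eq_bigr => i _; rewrite !mxE. Qed.

Lemma dotvC (R : realFieldType) n (a b : 'rV[R]_n) : dotv a b = dotv b a.
Proof. rewrite !dotvE; apply: eq_bigr => i _; exact: mulrC. Qed.

Lemma dotv_ge0 (R : realFieldType) n (a : 'rV[R]_n) : 0 <= dotv a a.
Proof. by rewrite dotvE; apply: sumr_ge0 => i _; rewrite -expr2 sqr_ge0. Qed.

Lemma dotvB (R : realFieldType) n (a b : 'rV[R]_n) :
  dotv (a - b) (a - b) = dotv a a - dotv a b - dotv b a + dotv b b.
Proof.
rewrite !dotvE -!sumrB -big_split /=; apply: eq_bigr => i _; rewrite !mxE; ring.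
Qed.

Lemma posdef_unit (R : realFieldType) n (G : 'M[R]_n) : posdef G -> G \in unitmx.
Proof.
case=> _ hpos; rewrite unitmxE unitfE; apply/negP => /det0P [v v0 vG].
by have := hpos v v0; rewrite vG mul0mx mxE ltxx.
Qed.

Lemma quad_bound (R : realFieldType) s M (A : 'M[R]_(s, M)) (lam : R) (x : 'rV[R]_M) :
  0 <= lam -> posdef (A *m A^T + lam%:M) ->
  0 <= (x *m (A^T *m invmx (A *m A^T + lam%:M) *m A) *m x^T) 0 0 /\
  (x *m (A^T *m invmx (A *m A^T + lam%:M) *m A) *m x^T) 0 0 <= dotv x x.
Proof.
move=> hl hG.
rewrite !mulmxA.
set G := A *m A^T + lam%:M in hG *.
have Gu := posdef_unit hG.
have GT : G^T = G by case: hG.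
set w := x *m A^T.
set u := w *m invmx G.
have wu : w = u *m G by rewrite /u mulmxKV.
set z := u *m A.
have q1 : (z *m x^T) 0 0 = dotv z x by [].
have e1 : z *m x^T = u *m w^T by rewrite /z /w trmx_mul trmxK mulmxA.
have q2 : (z *m x^T) 0 0 = dotv z z + lam * dotv u u.
  rewrite e1 /z /dotv; clear e1 q1; clearbody w u; rewrite wu.
  rewrite trmx_mul GT /G mulmxDl mul_scalar_mx mulmxDr -scalemxAr.
  by rewrite trmx_mul !mulmxA !mxE.
have h3 := dotv_ge0 (x - z).
rewrite dotvB (dotvC x z) in h3.
have h4 := dotv_ge0 z.
have h5 := mulr_ge0 hl (dotv_ge0 u).
split; lra.
Qed.

Lemma trace_rows (R : realFieldType) n M (W : 'M[R]_(n, M)) (Q : 'M[R]_M) :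
  \tr (W *m Q *m W^T) = \sum_j (row j W *m Q *m (row j W)^T) 0 0.
Proof.
rewrite /mxtrace; apply: eq_bigr => j _; rewrite !mxE; apply: eq_bigr => k _.
rewrite !mxE; congr (_ * _); apply: eq_bigr => l _; by rewrite !mxE.
Qed.

Lemma quadZ (R : realFieldType) M (Q : 'M[R]_M) (c : R) (x : 'rV[R]_M) :
  ((c *: x) *m Q *m (c *: x)^T) 0 0 = c ^+ 2 * (x *m Q *m x^T) 0 0.
Proof. by rewrite linearZ /= -!scalemxAl -scalemxAr !mxE expr2 mulrA. Qed.

Lemma sigma_rank (R : realFieldType) K M (Yt : 'M[R]_(K, M)) U sigma V j :
  is_svd Yt U sigma V -> (j < minn K M)%N -> (\rank Yt <= j)%N -> sigma j = 0.
Proof.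
case=> hU hV hs0 hsm hY hj hrk.
have hj' := hj; rewrite leq_min in hj'; case/andP: hj' => hjK hjM.
apply/eqP; apply: contraTT hrk => hs; rewrite -ltnNge.
have hsj : 0 < sigma j by rewrite lt_neqAle eq_sym hs hs0.
have hpos : forall i, (i <= j)%N -> 0 < sigma i.
  move=> i hi; apply: lt_le_trans hsj (hsm _ _ hi hj).
set D := diag_rect K M sigma in hY.
have hD : D = U^T *m Yt *m V^T.
  by rewrite hY !mulmxA hU mul1mx -mulmxA (mulmx1C hV) mulmx1.
have rD : (\rank D <= \rank Yt)%N.
  rewrite hD; apply: leq_trans (mxrankM_maxl _ _) _; exact: mxrankM_maxr.
set T := rowsub (fun i : 'I_j.+1 => widen_ord hjK i)
           (colsub (fun i : 'I_j.+1 => widen_ord hjM i) D).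
have rT : (\rank T <= \rank D)%N.
  apply: leq_trans (mxrankS (rowsub_sub _ _)) _.
  have -> : colsub (fun i : 'I_j.+1 => widen_ord hjM i) D
            = (rowsub (fun i : 'I_j.+1 => widen_ord hjM i) D^T)^T.
    by apply/matrixP => a b; rewrite !mxE.
  rewrite mxrank_tr -(mxrank_tr D); exact: (mxrankS (rowsub_sub _ _)).
have hT : T = diag_mx (\row_(i < j.+1) sigma i).
  apply/matrixP => a b; rewrite !mxE /=.
  case: (eqVneq a b) => [->|hab]; first by rewrite eqxx mulr1n.
  have hab2 : (val a == val b) = false by apply/negbTE. rewrite hab2 mulr0n /= ?hab2 //.
have rT' : \rank T = j.+1.
  apply: mxrank_unit; rewrite hT unitmxE det_diag unitfE.
  apply/prodf_neq0 => i _; rewrite mxE gt_eqF //; apply: hpos; rewrite -ltnS; exact: ltn_ord.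
by rewrite -rT'; apply: leq_trans rT rD.
Qed.

Lemma J_diff (R : realFieldType) N K M (X : 'M[R]_(N, M)) (lam : R) (hl : 0 <= lam)
  (Yt : 'M[R]_(K, M)) U sigma V (hsvd : is_svd Yt U sigma V) r (hr : (r <= \rank Yt)%N)
  (S : {set 'I_N}) (hS : posdef (gram X lam S)) :
  0 <= J X lam Yt S - J X lam (Zmat sigma V hr) S <= \sum_(r <= i < \rank Yt) sigma i ^+ 2.
Proof.
have hsvd' := hsvd.
case: hsvd' => hU hV hs0 hsm hY.
set A := rows_of X S.
set Q := A^T *m invmx (gram X lam S) *m A.
have JE : forall K' (Y : 'M[R]_(K', M)), J X lam Y S = \tr (Y *m Q *m Y^T).
  by move=> K' Y; rewrite /J /Q !mulmxA.
pose g := fun x : 'rV[R]_M => (x *m Q *m x^T) 0 0.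
have gb : forall x, 0 <= g x /\ g x <= dotv x x.
  move=> x; apply: quad_bound => //.
clearbody Q.
pose vrow := fun j : nat => \row_(k < M) (if (j < M)%N then V (insubd k j) k else 0).
pose T := fun j : nat => sigma j ^+ 2 * g (vrow j).
have rowD : forall j : 'I_K, row j (diag_rect K M sigma *m V) = sigma j *: vrow j.
  move=> j; apply/rowP => k; rewrite !mxE.
  case: (ltnP j M) => hjM.
    rewrite (bigD1 (Ordinal hjM)) //= big1 => [|l hl0].
      rewrite !mxE /= eqxx addr0; congr (_ * V _ _); apply: val_inj => /=.
      by rewrite insubdK.
    rewrite !mxE; case: eqP => [hjl|]; last by rewrite mul0r.
    by move: hl0; rewrite -val_eqE /= hjl eqxx.
  rewrite big1 ?mulr0 // => l _; rewrite !mxE.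
  case: eqP => [hjl|]; last by rewrite mul0r.
  by move: (ltn_ord l); rewrite -hjl ltnNge hjM.
have hrK : (r <= K)%N := rank_le_rows hr.
have hrM : (r <= M)%N := rank_le_cols hr.
have rowZ : forall i : 'I_r, row i (Zmat sigma V hr) = sigma i *: vrow i.
  move=> i; apply/rowP => k; rewrite !mxE.
  rewrite (bigD1 i) //= big1 => [|l hl0].
    rewrite !mxE /= eqxx addr0.
    have hiM : (i < M)%N by apply: leq_trans (ltn_ord i) hrM.
    rewrite hiM; congr (_ * V _ _); apply: val_inj => /=.
    by rewrite insubdK.
  rewrite !mxE /=; case: eqP => [hil|]; last by rewrite mul0r.
  by move: hl0; rewrite -val_eqE /= hil eqxx.
have JY : J X lam Yt S = \sum_(0 <= j < K) T j.
  have hY2 : Yt = U *m (diag_rect K M sigma *m V) by rewrite hY mulmxA.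
  set W := diag_rect K M sigma *m V in rowD hY2 *.
  rewrite JE hY2 trmx_mul mulmxA mxtrace_mulC !mulmxA hU mul1mx.
  rewrite -/W.
  rewrite trace_rows big_mkord; apply: eq_bigr => j _.
  by rewrite rowD quadZ.
have JZ : J X lam (Zmat sigma V hr) S = \sum_(0 <= j < r) T j.
  rewrite JE trace_rows big_mkord; apply: eq_bigr => j _.
  by rewrite rowZ quadZ.
rewrite JY JZ (@big_cat_nat _ _ _ r 0 K _ _ (leq0n r) hrK) /= addrC addrK.
have Tb : forall j, (j < K)%N ->
    0 <= T j /\ T j <= (if (j < \rank Yt)%N then sigma j ^+ 2 else 0).
  move=> j hjK; case: (ltnP j M) => hjM.
    have hv1 : dotv (vrow j) (vrow j) = 1.
      have e : (V *m V^T) (Ordinal hjM) (Ordinal hjM) = 1.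
        by rewrite (mulmx1C hV) mxE eqxx.
      rewrite !mxE in e; rewrite dotvE -e; apply: eq_bigr => k _.
      rewrite !mxE hjM.
      have -> : insubd k j = Ordinal hjM by apply: val_inj; rewrite /= insubdK.
      by [].
    have [g0 g1] := gb (vrow j); rewrite hv1 in g1.
    have s0 := sqr_ge0 (sigma j).
    case: (ltnP j (\rank Yt)) => hjr.
      rewrite /T; split; nra.
    rewrite /T; have -> : sigma j = 0 by apply: (sigma_rank hsvd) => //; rewrite leq_min hjK hjM.
    by rewrite expr0n /= mul0r; split.
  rewrite /T; have -> : vrow j = 0 by apply/rowP => k; rewrite !mxE ltnNge hjM.
  have -> : g 0 = 0 by rewrite /g !mul0mx mxE. rewrite mulr0; split => //.
  by case: ifP => _; rewrite ?sqr_ge0.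
apply/andP; split.
  rewrite big_nat_cond; apply: sumr_ge0 => j /andP[/andP[_ hj] _].
  by case: (Tb j hj).
apply: le_trans (ler_sum_nat (F := T)
   (G := fun j => if (j < \rank Yt)%N then sigma j ^+ 2 else 0) _) _.
  by move=> j /andP[_ hj]; case: (Tb j hj).
rewrite (@big_cat_nat _ _ _ (\rank Yt) r K _ _ hr (rank_leq_row Yt)) /=.
have e1 : \sum_(r <= j < \rank Yt) (if (j < \rank Yt)%N then sigma j ^+ 2 else 0)
    = \sum_(r <= j < \rank Yt) sigma j ^+ 2.
  by apply: eq_big_nat => j /andP[_ ->].
have e2 : \sum_(\rank Yt <= j < K) (if (j < \rank Yt)%N then sigma j ^+ 2 else 0) = 0.
  rewrite big_nat_cond big1 // => j /andP[/andP[hj _] _]; by rewrite ltnNge hj.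
by rewrite e1 e2 addr0.
Qed.

Theorem theorem3 (R : realFieldType) (N Ny M p : nat) (hpN : (p <= N)%N)
  (X : 'M[R]_(N, M)) (Yt : 'M[R]_(Ny, M)) (lam : R) (hlam : 0 <= lam)
  (U : 'M[R]_Ny) (sigma : nat -> R) (V : 'M[R]_M)
  (hsvd : is_svd Yt U sigma V)
  (r : nat) (hr : (r <= \rank Yt)%N)
  (sr sr2 : nat -> 'I_N) (Sr : nat -> {set 'I_N})
  (hgr : greedy X lam (Zmat sigma V hr) p sr Sr)
  (hgr2 : second_best X lam (Zmat sigma V hr) p sr sr2 Sr)
  (so : nat -> 'I_N) (So : nat -> {set 'I_N})
  (hgo : greedy X lam Yt p so So)
  (k' : nat) (hk' : (1 <= k' <= p)%N)
  (hgap : forall k, (1 <= k <= k')%N ->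
     J X lam (Zmat sigma V hr) (Sr k) - J X lam (Zmat sigma V hr) (sr2 k |: Sr k.-1)
       > \sum_(r <= i < \rank Yt) sigma i ^+ 2) :
  Sr k' = So k'.
Proof.
case/andP: hk' => hk'1 hk'p.
suff main : forall k, (k <= k')%N -> Sr k = So k by exact: main.
elim => [|k IH] hk.
  by case: hgr => -> _; case: hgo => -> _.
have hk1 : (1 <= k.+1 <= p)%N by rewrite /= (leq_trans hk hk'p).
have hkk : (1 <= k.+1 <= k')%N by rewrite /= hk.
case: hgr => _ /(_ _ hk1) [fr maxr Srk].
case: hgo => _ /(_ _ hk1) [fo maxo Sok].
case: (hgr2 _ hk1) => [f2 ne2 max2].
have gp := hgap _ hkk.
simpl in *.
have IHk := IH (ltnW hk).
suff e : so k.+1 = sr k.+1 by rewrite Srk Sok IHk e.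
apply/eqP; apply: contraT => hne.
rewrite -IHk in fo maxo.
have h1 := max2 _ fo hne.
have h2 := maxr _ fo.
have h3 := maxo _ fr.
rewrite /gain in h1 h2 h3.
have /andP[d1 d2] := J_diff hlam hsvd hr (proj2 fo).
have /andP[d3 d4] := J_diff hlam hsvd hr (proj2 fr).
rewrite Srk in gp.
lra.
Qed.
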